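(* Consider a no-slip billiard in the upper half-plane $\{z\ge 0\}$ in which a disk-shaped particle of negligible (but nonzero) radius with rotationally symmetric mass distribution constant $\gamma\ge 0$ moves under a constant force $\mathbf g=(0,0,-g)$, $g>0$, between collisions and collides with the line $z=0$ according to the no-slip law. Let $\mathbf q_n=(x_n,y_n,z_n)$ and $\mathbf p_n=\dot{\mathbf q}_n$ be the position and velocity immediately after the $n$-th collision ($n=0,1,2,\dots$), with $y_0=0$, $z_0=0$ and $\dot z_0>0$, and suppose $\dot x_0\neq 0$. Define the tangential-rotational ratio $\Delta=\dot y_0/\dot x_0$. Then: (i) the post-collision velocities are $2$-periodic: $\mathbf p_{n+2}=\mathbf p_n$ for all $n\ge 0$; (ii) if $\Delta=\gamma$, the orbit in phase space is $2$-periodic: $(\mathbf q_{n+2},\mathbf p_{n+2})=(\mathbf q_n,\mathbf p_n)$ for all $n\ge 0$; (iii) if $\Delta\neq\gamma$, then after every two collisions the particle undergoes the same nonzero net lateral displacement (a constant drift), and the position is unbounded.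
   Context: State coordinates: $x$ is the normalized rotational coordinate $x=\gamma R\vartheta$ ($R$ the particle radius, $\vartheta$ the rotation angle in radians), $y$ is the coordinate along the boundary line, $z$ the height (inward normal direction). The mass distribution constant is $\gamma=\sqrt{2\lambda}/R$ where $\lambda$ is the second moment of inertia per unit mass ($\gamma=0$ point mass, $\gamma=1/\sqrt2$ uniform disk, $\gamma=1$ ring); with these coordinates the kinetic energy is proportional to $\dot x^2+\dot y^2+\dot z^2$. Write $\gamma=\tan(\beta/2)$. Between collisions the particle moves freely under the force ($\ddot x=\ddot y=0$, $\ddot z=-g$). At a collision with $z=0$ with incoming velocity $(\dot x,\dot y,\dot z)$, the no-slip collision law gives outgoing velocity $(-\cos\beta\,\dot x-\sin\beta\,\dot y,\; -\sin\beta\,\dot x+\cos\beta\,\dot y,\; -\dot z)$ (this fixes the relative orientation convention of the rotational and tangential coordinates). Position $\mathbf q_n$ includes the rotational coordinate $x_n$. *)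

(* Defs.v *)
From Stdlib Require Import Reals.
Open Scope R_scope.

(* Phase-space state: position q = (x, y, z) and velocity p = (xdot, ydot, zdot).
   x = gamma * R * theta is the normalized rotational coordinate,
   y the coordinate along the boundary line, z the height. *)
Record state := mkState { qx : R; qy : R; qz : R; px : R; py : R; pz : R }.

(* gamma = tan(beta/2), i.e. beta = 2 atan gamma (beta in [0, pi) for gamma >= 0). *)
Definition beta (gamma : R) : R := 2 * atan gamma.

(* Time of flight from a collision point on z = 0 with upward velocity zdot > 0
   under the force (0,0,-g): first positive root of zdot t - g t^2 / 2 = 0. *)
Definition flight_time (g : R) (s : state) : R := 2 * pz s / g.

Definition step (g gamma : R) (s : state) : state :=
  let t := flight_time g s in
  let b := beta gamma in
  let vx := px s in
  let vy := py s in
  let vz := pz s - g * t in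
  mkState (qx s + px s * t)
          (qy s + py s * t)
          (qz s + pz s * t - g * t ^ 2 / 2)
          (- cos b * vx - sin b * vy)
          (- sin b * vx + cos b * vy)
          (- vz).

(* orbit n = (q_n, p_n): state immediately after the n-th collision. *)
Fixpoint orbit (g gamma : R) (s0 : state) (n : nat) : state :=
  match n with
  | O => s0
  | S m => step g gamma (orbit g gamma s0 m)
  end.

(* Main.v *)
Require Import Defs.
From Stdlib Require Import Reals Lra Lia.
Open Scope R_scope.

Lemma state_ext a b : qx a = qx b -> qy a = qy b -> qz a = qz b ->
  px a = px b -> py a = py b -> pz a = pz b -> a = b.
Proof. destruct a, b; simpl; intros; subst; reflexivity. Qed.

Section S.
Variables g gamma : R.
Hypothesis Hg : 0 < g.
Let c := cos (beta gamma).
Let s := sin (beta gamma).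

Lemma cs1 : c * c + s * s = 1.
Proof. unfold c, s. pose proof (sin2_cos2 (beta gamma)). unfold Rsqr in H. lra. Qed.

Lemma step_pz st : pz (step g gamma st) = pz st.
Proof. unfold step, flight_time; simpl. field. lra. Qed.

Lemma step_qz st : qz (step g gamma st) = qz st.
Proof. unfold step, flight_time; simpl. field. lra. Qed.

Lemma step_px st : px (step g gamma st) = - c * px st - s * py st.
Proof. reflexivity. Qed.
Lemma step_py st : py (step g gamma st) = - s * px st + c * py st.
Proof. reflexivity. Qed.
Lemma step_qx st : qx (step g gamma st) = qx st + px st * (2 * pz st / g).
Proof. reflexivity. Qed.
Lemma step_qy st : qy (step g gamma st) = qy st + py st * (2 * pz st / g).
Proof. reflexivity. Qed.

Lemma step2_px st : px (step g gamma (step g gamma st)) = px st.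
Proof.
  rewrite step_px, step_px, step_py. pose proof cs1.
  transitivity ((c*c+s*s) * px st); [ring | rewrite H; ring].
Qed.
Lemma step2_py st : py (step g gamma (step g gamma st)) = py st.
Proof.
  rewrite step_py, step_px, step_py. pose proof cs1.
  transitivity ((c*c+s*s) * py st); [ring | rewrite H; ring].
Qed.

Lemma orbit_pz s0 n : pz (orbit g gamma s0 n) = pz s0.
Proof. induction n; [reflexivity| change (orbit g gamma s0 (S n)) with (step g gamma (orbit g gamma s0 n)); rewrite step_pz; auto]. Qed.
Lemma orbit_qz s0 n : qz (orbit g gamma s0 n) = qz s0.
Proof. induction n; [reflexivity| change (orbit g gamma s0 (S n)) with (step g gamma (orbit g gamma s0 n)); rewrite step_qz; auto]. Qed.

Lemma orbit2 s0 n : orbit g gamma s0 (n + 2) = step g gamma (step g gamma (orbit g gamma s0 n)).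
Proof. replace (n + 2)%nat with (S (S n)) by lia. reflexivity. Qed.

Lemma sumx s0 n : px (orbit g gamma s0 n) + px (orbit g gamma s0 (S n)) = px s0 + px (step g gamma s0).
Proof.
  induction n; [reflexivity|].
  change (orbit g gamma s0 (S (S n))) with (step g gamma (step g gamma (orbit g gamma s0 n))).
  rewrite step2_px. simpl in *. lra.
Qed.
Lemma sumy s0 n : py (orbit g gamma s0 n) + py (orbit g gamma s0 (S n)) = py s0 + py (step g gamma s0).
Proof.
  induction n; [reflexivity|].
  change (orbit g gamma s0 (S (S n))) with (step g gamma (step g gamma (orbit g gamma s0 n))).
  rewrite step2_py. simpl in *. lra.
Qed.

Lemma driftx s0 n : qx (orbit g gamma s0 (n+2)) = qx (orbit g gamma s0 n) +
   (px s0 + px (step g gamma s0)) * (2 * pz s0 / g).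
Proof.
  rewrite orbit2, !step_qx. rewrite !step_pz, !orbit_pz.
  rewrite <- (sumx s0 n). simpl. ring.
Qed.
Lemma drifty s0 n : qy (orbit g gamma s0 (n+2)) = qy (orbit g gamma s0 n) +
   (py s0 + py (step g gamma s0)) * (2 * pz s0 / g).
Proof.
  rewrite orbit2, !step_qy, !step_pz, !orbit_pz.
  rewrite <- (sumy s0 n). simpl. ring.
Qed.

Lemma dy_form s0 : py s0 + py (step g gamma s0) =
  2 * cos (atan gamma) * cos (atan gamma) * (py s0 - gamma * px s0).
Proof.
  rewrite step_py. unfold s, c, beta. rewrite sin_2a, cos_2a_cos.
  assert (H : sin (atan gamma) = gamma * cos (atan gamma)).
  { rewrite sin_atan, cos_atan. field. intro H0.
    assert (0 < sqrt (1 + gamma²)) by (apply sqrt_lt_R0; unfold Rsqr; nra). lra. }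
  rewrite H. ring.
Qed.

End S.

Theorem theorem1 (g gamma : R) (s0 : state) :
  0 < g -> 0 <= gamma ->
  qy s0 = 0 -> qz s0 = 0 -> 0 < pz s0 -> px s0 <> 0 ->
  let Delta := py s0 / px s0 in
  (* (i) post-collision velocities are 2-periodic *)
  (forall n : nat,
      px (orbit g gamma s0 (n + 2)) = px (orbit g gamma s0 n) /\
      py (orbit g gamma s0 (n + 2)) = py (orbit g gamma s0 n) /\
      pz (orbit g gamma s0 (n + 2)) = pz (orbit g gamma s0 n)) /\
  (* (ii) Delta = gamma: the phase-space orbit is 2-periodic *)
  (Delta = gamma -> forall n : nat, orbit g gamma s0 (n + 2) = orbit g gamma s0 n) /\
  (* (iii) Delta <> gamma: constant nonzero lateral drift every two collisions,
     and unbounded position *)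
  (Delta <> gamma ->
     (exists dx dy dz : R, dy <> 0 /\
        forall n : nat,
          qx (orbit g gamma s0 (n + 2)) = qx (orbit g gamma s0 n) + dx /\
          qy (orbit g gamma s0 (n + 2)) = qy (orbit g gamma s0 n) + dy /\
          qz (orbit g gamma s0 (n + 2)) = qz (orbit g gamma s0 n) + dz) /\
     ~ (exists M : R, forall n : nat,
          Rabs (qx (orbit g gamma s0 n)) <= M /\
          Rabs (qy (orbit g gamma s0 n)) <= M /\
          Rabs (qz (orbit g gamma s0 n)) <= M)).
Proof.
  intros Hg Hga Hy0 Hz0 Hpz Hpx Delta.
  assert (Hcpos : 0 < cos (atan gamma)).
  { rewrite cos_atan. apply Rdiv_lt_0_compat; [lra|].
    apply sqrt_lt_R0; unfold Rsqr; nra. }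
  assert (HT : 0 < 2 * pz s0 / g) by (apply Rdiv_lt_0_compat; lra).
  split; [|split].
  - intro n. rewrite !orbit2, step2_px, step2_py, !step_pz by exact Hg. auto.
  - intros HD n.
    assert (Hd : py s0 - gamma * px s0 = 0).
    { unfold Delta in HD. rewrite <- HD. field. exact Hpx. }
    assert (Hdx : px s0 + px (step g gamma s0) = 0).
    { assert (H2 := dy_form g gamma s0). rewrite Hd in H2.
      rewrite step_px. unfold beta. rewrite sin_2a, cos_2a_cos.
      assert (H : sin (atan gamma) = gamma * cos (atan gamma)).
      { rewrite sin_atan, cos_atan. field. intro H0.
        assert (0 < sqrt (1 + gamma²)) by (apply sqrt_lt_R0; unfold Rsqr; nra). lra. }
      assert (HC : cos (atan gamma) * cos (atan gamma) * (1 + gamma * gamma) = 1).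
      { pose proof (sin2_cos2 (atan gamma)) as E. unfold Rsqr in E. rewrite H in E. lra. }
      rewrite H.
      transitivity (2 * cos (atan gamma) * cos (atan gamma) * gamma * (gamma * px s0 - py s0)
         + 2 * (1 - cos (atan gamma) * cos (atan gamma) * (1 + gamma * gamma)) * px s0); [ring|].
      rewrite HC.
      replace (gamma * px s0 - py s0) with 0 by lra. ring. }
    assert (Hdy : py s0 + py (step g gamma s0) = 0).
    { rewrite dy_form, Hd by exact Hg. ring. }
    pose proof (driftx g gamma Hg s0 n) as E1.
    pose proof (drifty g gamma Hg s0 n) as E2.
    rewrite Hdx in E1. rewrite Hdy in E2.
    apply state_ext.
    + rewrite E1. ring.
    + rewrite E2. ring.
    + rewrite !orbit_qz by exact Hg. reflexivity.
    + rewrite orbit2, step2_px by exact Hg. reflexivity.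
    + rewrite orbit2, step2_py by exact Hg. reflexivity.
    + rewrite !orbit_pz by exact Hg. reflexivity.
  - intro HD.
    set (dy := (py s0 + py (step g gamma s0)) * (2 * pz s0 / g)).
    assert (Hdy : dy <> 0).
    { unfold dy. rewrite dy_form by exact Hg.
      assert (py s0 - gamma * px s0 <> 0).
      { intro H. apply HD. unfold Delta. replace (py s0) with (gamma * px s0) by lra.
        field. exact Hpx. }
      intro H0. apply Rmult_integral in H0. destruct H0 as [H0|H0]; [|lra].
      apply Rmult_integral in H0. destruct H0 as [H0|H0]; [|auto].
      nra. }
    split.
    + exists ((px s0 + px (step g gamma s0)) * (2 * pz s0 / g)), dy, 0.
      split; [exact Hdy|]. intro n.
      rewrite driftx, drifty, !orbit_qz by exact Hg. unfold dy. repeat split; ring.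
    + intros [M HM].
      assert (Hk : forall k, qy (orbit g gamma s0 (2*k)) = INR k * dy).
      { induction k. simpl. rewrite Hy0; ring.
        replace (2 * S k)%nat with (2*k + 2)%nat by lia.
        rewrite drifty by exact Hg. fold dy. rewrite IHk, S_INR. ring. }
      assert (Habs : Rabs dy > 0) by (apply Rabs_pos_lt; exact Hdy).
      destruct (INR_archimed (Rabs dy) M Habs) as [k Hk2].
      destruct (HM (2*k)%nat) as [_ [H _]].
      rewrite Hk, Rabs_mult, Rabs_pos_eq in H by apply pos_INR. lra.
Qed.
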